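(* For every $n\ge2$, the total number of edges, summed over all plane trees $T$ on $n$ vertices and all leaves $\ell$ of $T$, of the path from the root to $\ell$ equals $4^{n-2}$. The total number of leaves over all plane trees on $n$ vertices is $\frac12\binom{2n-2}{n-1}$. Consequently, the expected length of the root-to-leaf path, for a uniformly random pair (plane tree on $n$ vertices, leaf of it), is $$\frac{(2n-2)!!}{2\,(2n-3)!!}=\frac{\sqrt{\pi n}}{2}+O\Bigl(\frac1{\sqrt n}\Bigr).$$
   Context: General (plane) trees are rooted trees in which every vertex may have any number of children and the children of each vertex are linearly ordered. The size of a tree is its number of vertices, and a leaf is a vertex with no children. The double factorials are $(2m)!!=2\cdot4\cdots(2m)$ and $(2m-1)!!=1\cdot3\cdots(2m-1)$, with $0!!=1$. *)

(* Defs.v *)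
From Stdlib Require Import Reals List.
From mathcomp Require Import all_boot.

Inductive ptree : Type := Node : seq ptree -> ptree.

Fixpoint tsize (t : ptree) : nat :=
  match t with Node ts => (sumn (map tsize ts)).+1 end.

Fixpoint leaf_depths (t : ptree) : seq nat :=
  match t with
  | Node [::] => [:: 0]
  | Node ts => map S (flatten (map leaf_depths ts))
  end.

Definition nleaves (t : ptree) : nat := size (leaf_depths t).

Definition leaf_path_total (t : ptree) : nat := sumn (leaf_depths t).

Definition enum_trees (n : nat) (s : seq ptree) : Prop :=
  List.NoDup s /\ forall t, List.In t s <-> tsize t = n.

Fixpoint dfact (k : nat) : nat :=
  match k with
  | 0 => 1
  | 1 => 1
  | (k'.+1).+1 as k2 => k2 * dfact k'
  end.

(* Main.v *)
Require Import Defs.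
From Stdlib Require Import Reals List Permutation Lra Lia.
From Coquelicot Require Import Coquelicot.
From mathcomp Require Import all_boot zify.
Close Scope R_scope.


Lemma mapE (A B : Type) (f : A -> B) (l : seq A) : seq.map f l = List.map f l.
Proof. by elim: l => //= x l ->. Qed.
Lemma catE (A : Type) (l1 l2 : seq A) : cat l1 l2 = List.app l1 l2.
Proof. by elim: l1 => //= x l ->. Qed.

Lemma NoDup_map_in (A B : Type) (f : A -> B) (l : list A) :
  NoDup l -> (forall x y, List.In x l -> List.In y l -> f x = f y -> x = y) ->
  NoDup (List.map f l).
Proof.
elim: l => [|x l IH] /=; first by constructor.
move=> H Hinj; inversion H; subst; constructor.
- move/in_map_iff=> [y [Hy Hyl]].
  have := Hinj y x (or_intror Hyl) (or_introl erefl) Hy. by move=> E; subst.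
- apply: IH => // a b Ha Hb; exact: Hinj (or_intror Ha) (or_intror Hb).
Qed.

Lemma sumn_perm (A : Type) (f : A -> nat) (l l' : list A) :
  Permutation l l' -> sumn (map f l) = sumn (map f l').
Proof. elim=> //= [x a b _ IH|x y a|a b c _ IH1 _ IH2]; [by rewrite IH|lia|by rewrite IH1]. Qed.

Lemma sumn_eq_in (A : Type) (f g : A -> nat) (l : list A) :
  (forall x, List.In x l -> f x = g x) -> sumn (map f l) = sumn (map g l).
Proof. elim: l => //= x l IH H. rewrite H; last by left. by rewrite IH // => y Hy; apply H; right. Qed.

Definition fsize (f : seq ptree) := sumn (map Defs.tsize f).
Definition tot (X : seq (seq ptree)) := sumn (map fsize X).
Definition lf (f : seq ptree) := sumn (map nleaves f).
Definition df (f : seq ptree) := sumn (map leaf_path_total f).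
Definition build (Y : seq (seq ptree)) : seq (seq ptree) :=
  match Y with f :: g :: rest => (Node f :: g) :: rest | _ => [::] end.

Fixpoint E (k m r : nat) : seq (seq (seq ptree)) :=
  match k with 0 => [::]
  | k'.+1 => match r with
     | 0 => if m is 0 then [:: [::]] else [::]
     | r'.+1 => map (cons [::]) (E k' m r') ++
                (if m is m'.+1 then map build (E k' m' r'.+2) else [::])
     end end.

Lemma E_mem k : forall m r X, 2*m + r < k ->
  (List.In X (E k m r) <-> size X = r /\ tot X = m).
Proof.
elim: k => [|k IH] m r X Hk; first lia.
case: r Hk => [|r] Hk /=.
- case: m Hk => [|m] Hk /=.
  + split; first by case=> [<-|[]].
    case: X => [|x X] /= []; [by left|done].
  + split => //. case: X => [|x X] [] //.
- rewrite catE mapE in_app_iff in_map_iff.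
  split.
  + case.
    * move=> [Y [<- HY]]. move/IH: HY => /(_ ltac:(lia)) [H1 H2] /=. by rewrite H1 /tot /= -H2.
    * case: m Hk => [|m] Hk //. rewrite mapE in_map_iff => -[Y [<- HY]].
      move/IH: HY => /(_ ltac:(lia)) [H1 H2].
      case: Y H1 H2 => [|f [|g rest]] //= [H1] H2. rewrite /tot /= /fsize /= in H2 *. split; [by rewrite H1|lia].
  + case: X => [|x X] [Hs Ht]; first by inversion Hs.
    move: Hs => /= [Hs].
    move: Ht; rewrite /tot /= /fsize /= => Ht.
    destruct x as [|t g].
    * left. exists X. split; first by [].
      apply/IH; first lia. split; first by [].
      move: Ht => /=. rewrite /tot /fsize. lia.
    * right. destruct t as [f].
      move: Ht => /= Ht.
      destruct m as [|m]; first lia.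
      rewrite mapE in_map_iff. exists [:: f, g & X]. split; first by [].
      apply/IH; first lia. rewrite /tot /= /fsize. split; [by rewrite Hs | lia].
Qed.

Lemma E_size k : forall m r X, List.In X (E k m r) -> size X = r.
Proof.
elim: k => [|k IH] m r X //=.
case: r => [|r].
- case: m => [|m] /=; last done. by case=> // <-.
- rewrite catE mapE in_app_iff in_map_iff. case.
  + by move=> [Y [<- /IH Hy]] /=; rewrite Hy.
  + case: m => [|m] //. rewrite mapE in_map_iff => -[Y [<- /IH]].
    by case: Y => [|f [|g rest]] //= [->].
Qed.

Lemma E_nodup k : forall m r, NoDup (E k m r).
Proof.
elim: k => [|k IH] m r /=; first constructor.
case: r => [|r].
- case: m => [|m]; repeat constructor; by [].
- rewrite catE mapE. apply: NoDup_app.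
  + apply: NoDup_map_in; first exact: IH. by move=> x y _ _ [].
  + case: m => [|m]; first constructor. rewrite ?mapE.
    apply: NoDup_map_in => // x y /E_size Hx /E_size Hy.
    case: x Hx => [|f1 [|g1 r1]] //; case: y Hy => [|f2 [|g2 r2]] //= _ _.
    by case=> -> -> ->.
  + move=> a /in_map_iff [x [<- _]].
    case: m => [|m] //. rewrite ?mapE => /in_map_iff [y [Hy /E_size]].
    case: y Hy => [|f [|g rest]] //= [].
Qed.


Lemma bin_mid m : 'C(m.*2.+1, m) = 'C(m.*2.+1, m.+1).
Proof.
have H := @bin_sub (m.*2.+1) m. rewrite -H; last lia.
by have ->: m.*2.+1 - m = m.+1 by lia.
Qed.

Lemma bin_mid2 m : ('C(m.*2.+1, m)).*2 = 'C(m.*2.+2, m.+1).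
Proof. by rewrite binS -bin_mid addnn. Qed.

Lemma half_sum m : (\sum_(0 <= j < m.+1) 'C(m.*2.+1, j)).*2 = 2 ^ (m.*2.+1).
Proof.
have full : \sum_(0 <= j < m.*2.+2) 'C(m.*2.+1, j) = 2 ^ (m.*2.+1).
  have := expnDn 1 1 (m.*2.+1). rewrite big_mkord => ->.
  by apply: eq_bigr => i _; rewrite !exp1n !muln1.
rewrite -full (@big_cat_nat _ _ _ m.+1 0 m.*2.+2) //=; last by rewrite -addnn; lia.
have ->: m.*2.+2 = m.+1 + m.+1 by lia.
rewrite (big_addn 0 _ m.+1) -addnn; congr (_ + _).
have ->: m.+1 + m.+1 - m.+1 = m.+1 by lia.
rewrite big_nat_rev /=. apply: congr_big_nat => // i /andP [_ Hi].
rewrite -bin_sub; last lia. congr 'C(_, _); lia.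
Qed.

Definition Sc m r := if m is m'.+1 then 'C(m'.*2 + r, m') else 0.
Definition Dc m r := if m is m'.+1 then \sum_(0 <= j < m') 'C(m'.*2 + r, j) else 0.

Lemma P1 m r : Sc m.+1 r.+1 = Sc m.+1 r + Sc m r.+2.
Proof.
case: m => [|m] /=; first by rewrite !bin0.
have ->: (m.+1).*2 + r.+1 = ((m.+1).*2 + r).+1 by lia.
rewrite binS; congr (_ + _). congr (binomial _ _). rewrite doubleS; lia.
Qed.

Lemma Lsum a p : \sum_(0 <= j < p.+1) 'C(a.+1, j) =
  \sum_(0 <= j < p.+1) 'C(a, j) + \sum_(0 <= j < p) 'C(a, j).
Proof.
elim: p => [|p IH]; first by rewrite !big_nat1 big_geq // !bin0.
rewrite big_nat_recr //= IH binS [in RHS]big_nat_recr //= [in RHS](big_nat_recr p) //=.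
rewrite (big_nat_recr p) //=. lia.
Qed.

Lemma P2 m r : Dc m.+1 r.+1 = Dc m.+1 r + Dc m r.+2.
Proof.
case: m => [|m] /=; first by rewrite !big_geq.
have ->: (m.+1).*2 + r.+1 = ((m.+1).*2 + r).+1 by lia.
rewrite Lsum. congr (_ + _). apply: eq_bigr => i _; congr 'C(_, _). rewrite doubleS; lia.
Qed.

Lemma P3 m r : Dc m.+1 r = (Dc m r.+1).*2 + Sc m r.+1.
Proof.
case: m => [|m] /=; first by rewrite big_geq.
have ->: (m.+1).*2 + r = (m.*2 + r.+1).+1 by rewrite doubleS; lia.
rewrite Lsum big_nat_recr //= -addnn. lia.
Qed.


Lemma sumn_mapS (l : seq nat) : sumn (map S l) = sumn l + size l.
Proof. elim: l => //= x l ->. lia. Qed.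

Lemma nleaves_Node f : nleaves (Node f) = lf f + (if f is [::] then 1 else 0).
Proof.
case: f => [|t ts] //. rewrite {1}/nleaves.
change (leaf_depths (Node (t::ts))) with (map S (flatten (map leaf_depths (t::ts)))).
rewrite size_map size_flatten /shape -map_comp addn0. by [].
Qed.

Lemma lpt_Node f : leaf_path_total (Node f) = df f + lf f.
Proof.
case: f => [|t ts] //. rewrite {1}/leaf_path_total.
change (leaf_depths (Node (t::ts))) with (map S (flatten (map leaf_depths (t::ts)))).
by rewrite sumn_mapS size_flatten /shape sumn_flatten -!map_comp.
Qed.

Definition lfi i (X : seq (seq ptree)) := lf (nth [::] X i).
Definition dfi i (X : seq (seq ptree)) := df (nth [::] X i).
Definition ind (X : seq (seq ptree)) := if X is [::] :: _ then 1 else 0.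

Lemma sumE (h : seq (seq ptree) -> nat) k m r :
  sumn (map h (E k.+1 m r.+1)) =
  sumn (map (fun x => h ([::] :: x)) (E k m r)) +
  (if m is m'.+1 then sumn (map (fun Y => h (build Y)) (E k m' r.+2)) else 0).
Proof.
rewrite /= map_cat sumn_cat -map_comp. congr (_ + _).
by case: m => [|m] //=; rewrite -map_comp.
Qed.

Lemma sizeE k m r : size (E k.+1 m r.+1) =
  size (E k m r) + (if m is m'.+1 then size (E k m' r.+2) else 0).
Proof. by rewrite /= size_cat size_map; case: m => //= m; rewrite size_map. Qed.

Lemma invN k : forall m r, 2*m + r < k -> size (E k m r) + (Sc m r.+1).*2 = Sc m.+1 r.
Proof.
elim: k => [|k IH] m r Hk; first lia.
case: r Hk => [|r] Hk.
- case: m Hk => [|m] Hk /=; first by rewrite bin0.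
  by rewrite add0n addn1 addn0 doubleS bin_mid2.
- rewrite sizeE. case: m Hk => [|m] Hk.
  + have := IH 0 r ltac:(lia). rewrite /= !bin0 => H. lia.
  + have H1 := IH m.+1 r ltac:(lia). have H2 := IH m r.+2 ltac:(lia).
    have Q1 := P1 m.+1 r. have Q2 := P1 m r.+1. lia.
Qed.



Lemma sum_ind k m r : 2*m + r < k.+1 ->
  sumn (map ind (E k.+1 m r.+1)) = size (E k m r).
Proof.
move=> Hk. rewrite sumE.
have ->: sumn [seq ind ([::] :: x) | x <- E k m r] = size (E k m r).
  by elim: (E k m r) => //= x l ->.
case: m Hk => [|m] Hk; first by rewrite addn0.
rewrite (@sumn_eq_in _ _ (fun _ => 0)).
  by elim: (E k m r.+2) => //= *; rewrite addn0.
move=> Y /E_size. by case: Y => [|f [|g rest]].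
Qed.

Lemma sumn_map_add (A : Type) (f g : A -> nat) l :
  sumn (map (fun x => f x + g x) l) = sumn (map f l) + sumn (map g l).
Proof. elim: l => //= x l ->. lia. Qed.

Lemma sum0 (A : Type) (l : seq A) : sumn (map (fun _ => 0) l) = 0.
Proof. by elim: l. Qed.

Lemma invS k : forall m r i, 2*m + r < k -> i < r ->
  sumn (map (lfi i) (E k m r)) = Sc m r.
Proof.
elim: k => [|k IH] m r i Hk Hi; first lia.
case: r Hk Hi => [|r] Hk Hi //.
rewrite sumE. case: i Hi => [|i] Hi.
- rewrite (@sumn_eq_in _ _ (fun _ => 0)) // sum0 add0n.
  case: m Hk => [|m] Hk //.
  rewrite (@sumn_eq_in _ _ (fun Y => lfi 0 Y + lfi 1 Y + ind Y)); last first.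
    move=> Y /E_size. case: Y => [|f [|g rest]] //= _.
    rewrite /lfi /= /lf /= nleaves_Node /lf. lia.
  rewrite (@sumn_map_add _ (fun Y => lfi 0 Y + lfi 1 Y) ind) sumn_map_add.
  rewrite (IH m r.+2 0) ?(IH m r.+2 1) //; try lia.
  case: k IH Hk => [|k] IH Hk; first lia.
  rewrite sum_ind; last lia.
  have := invN k m r.+1 ltac:(lia). rewrite -addnn. lia.
- rewrite (@sumn_eq_in _ _ (lfi i)) // (IH m r i) //; try lia.
  case: m Hk => [|m] Hk //.
  rewrite (@sumn_eq_in _ _ (lfi i.+2)); last first.
    move=> Y /E_size. by case: Y => [|f [|g rest]].
  rewrite (IH m r.+2 i.+2); try lia. by rewrite P1.
Qed.

Lemma invD k : forall m r i, 2*m + r < k -> i < r ->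
  sumn (map (dfi i) (E k m r)) = Dc m r.
Proof.
elim: k => [|k IH] m r i Hk Hi; first lia.
case: r Hk Hi => [|r] Hk Hi //.
rewrite sumE. case: i Hi => [|i] Hi.
- rewrite (@sumn_eq_in _ _ (fun _ => 0)) // sum0 add0n.
  case: m Hk => [|m] Hk //.
  rewrite (@sumn_eq_in _ _ (fun Y => dfi 0 Y + dfi 1 Y + lfi 0 Y)); last first.
    move=> Y /E_size. case: Y => [|f [|g rest]] //= _.
    rewrite /dfi /lfi /= /df /= lpt_Node /df /lf. lia.
  rewrite (@sumn_map_add _ (fun Y => dfi 0 Y + dfi 1 Y) (lfi 0)) sumn_map_add.
  rewrite (IH m r.+2 0) ?(IH m r.+2 1) ?(invS k m r.+2 0) //; try lia.
  rewrite P3 -addnn. lia.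
- rewrite (@sumn_eq_in _ _ (dfi i)) // (IH m r i) //; try lia.
  case: m Hk => [|m] Hk //.
  rewrite (@sumn_eq_in _ _ (dfi i.+2)); last first.
    move=> Y /E_size. by case: Y => [|f [|g rest]].
  rewrite (IH m r.+2 i.+2); try lia. by rewrite P2.
Qed.


Definition TT k := map (fun X => Node (nth [::] X 0)) (E (k.*2.+2) k 1).

Lemma TT_mem k X : List.In X (E (k.*2.+2) k 1) -> X = [:: nth [::] X 0] /\ fsize (nth [::] X 0) = k.
Proof.
have Hk : 2*k + 1 < k.*2.+2 by rewrite -addnn; lia.
move/E_mem => /(_ Hk) [].
case: X => [|f [|g rest]] //= _. rewrite /tot /= addn0 => ->. by [].
Qed.

Lemma TT_enum k : enum_trees k.+1 (TT k).
Proof.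
split.
- rewrite /TT mapE. apply: NoDup_map_in; first exact: E_nodup.
  move=> x y /TT_mem [Hx _] /TT_mem [Hy _] [E1]. by rewrite Hx Hy E1.
- move=> [f]. rewrite /TT mapE in_map_iff. split.
  + move=> [X [[<-] /TT_mem [_ H]]]. by rewrite /= -H.
  + move=> [H]. exists [:: f]. split => //. apply/E_mem; first by rewrite -addnn; lia.
    by rewrite /tot /= addn0.
Qed.

Lemma enum_perm n s s' : enum_trees n s -> enum_trees n s' -> Permutation s s'.
Proof.
move=> [N1 H1] [N2 H2]. apply: NoDup_Permutation => // x. by rewrite H1 H2.
Qed.

Lemma TT_leaves k : sumn (map nleaves (TT k.+1)) = 'C(k.*2.+1, k).
Proof.
rewrite /TT -map_comp.
rewrite (@sumn_eq_in _ _ (lfi 0)); last first.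
  move=> X /TT_mem [HX Hs] /=. rewrite nleaves_Node /lfi.
  destruct (nth [::] X 0) as [|t f]; first by inversion Hs.
  by rewrite addn0.
rewrite (invS _ _ _ 0) //; last lia. rewrite /=. congr (binomial _ _). lia.
Qed.

Lemma TT_paths k : sumn (map leaf_path_total (TT k.+1)) = 4 ^ k.
Proof.
rewrite /TT -map_comp.
rewrite (@sumn_eq_in _ _ (fun X => dfi 0 X + lfi 0 X)); last first.
  move=> X _ /=. by rewrite lpt_Node.
rewrite sumn_map_add (invD _ _ _ 0) ?(invS _ _ _ 0) //; try lia.
rewrite /= -big_nat_recr //=.
have ->: k.*2 + 1 = k.*2.+1 by lia.
apply/eqP; rewrite -(eqn_pmul2l (isT : 0 < 2)) mul2n half_sum.
by rewrite expnS -mul2n expnM.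
Qed.

Open Scope R_scope.

Definition I (n : nat) : R := RInt (fun x => sin x ^ n) 0 (PI/2).

Lemma PI2_pos : 0 < PI/2.
Proof. have := PI_RGT_0. lra. Qed.

Lemma ex_I n : ex_RInt (fun x => sin x ^ n) 0 (PI/2).
Proof.
apply: ex_RInt_continuous => z _. apply: ex_derive_continuous. auto_derive. done.
Qed.

Lemma I_rec n : (INR n + 2) * I (S (S n)) = (INR n + 1) * I n.
Proof.
set g := fun x => minus (scal (INR n + 1) (sin x ^ n)) (scal (INR n + 2) (sin x ^ (S (S n)))).
set F := fun x => sin x ^ (S n) * cos x.
have Hd : is_RInt g 0 (PI/2) (minus (F (PI/2)) (F 0)).
  apply: is_RInt_derive.
  - move=> x _. rewrite /F /g. auto_derive; first done.
    have -> : (match n with 0%N => 1 | _.+1 => INR n + 1 end) = INR n + 1 by clear g F; case: n => [|n] /=; ring.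
    rewrite /minus /plus /opp /scal /= /mult /=.
    have Hc : cos x * cos x = 1 - sin x * sin x.
      have := sin2 x. rewrite /Rsqr => Hs. lra.
    transitivity ((INR n+1)*sin x^n*(cos x*cos x) - sin x^n*(sin x*sin x)); first ring.
    rewrite Hc. ring.
  - move=> x _. apply: ex_derive_continuous. rewrite /g /minus /plus /opp /scal /= /mult /=. auto_derive. done.
have H0 : RInt g 0 (PI/2) = 0.
  rewrite (is_RInt_unique _ _ _ _ Hd) /F /= cos_PI2 sin_0 /minus /plus /opp /=. ring.
rewrite /I. move: H0. rewrite /g RInt_minus ?RInt_scal; try (apply: ex_RInt_scal); try apply: ex_I.
rewrite /minus /plus /opp /scal /= /mult /=. lra.
Qed.

Lemma I0 : I 0 = PI/2.
Proof. rewrite /I /= RInt_const /scal /= /mult /=. ring. Qed.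

Lemma I1 : I 1 = 1.
Proof.
have Hd : is_RInt (fun x => sin x ^ 1) 0 (PI/2) (minus ((fun x => - cos x) (PI/2)) ((fun x => - cos x) 0)).
  apply: (is_RInt_derive (fun x => - cos x)).
  - move=> x _. auto_derive; first done. ring.
  - move=> x _. apply: ex_derive_continuous. auto_derive. done.
rewrite /I (is_RInt_unique _ _ _ _ Hd) /= cos_PI2 cos_0 /minus /plus /opp /=. ring.
Qed.

Lemma I_mono n : I (S n) <= I n.
Proof.
apply: RInt_le; try apply: ex_I; first by have := PI2_pos; lra.
move=> x [H1 H2].
have Hs0 : 0 <= sin x by apply: sin_ge_0; have := PI2_pos; lra.
have Hs1 : sin x <= 1 by have := SIN_bound x; lra.
have Hp : 0 <= sin x ^ n by apply: pow_le.
rewrite /=. nra.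
Qed.

Lemma dfact_SS k : dfact k.+2 = (k.+2 * dfact k)%nat :> nat.
Proof. by []. Qed.

Lemma dfact_odd m : dfact (m.*2.+1) = (m.*2.+1 * dfact (m.*2).-1)%nat :> nat.
Proof. case: m => [|m] //. Qed.

Lemma INR_SS k : INR k.+2 = INR k + 2.
Proof. rewrite !S_INR. ring. Qed.

Lemma Iclosed m : I (m.*2) * INR (dfact (m.*2)) = PI/2 * INR (dfact (m.*2).-1) /\
                  I (m.*2.+1) * INR (dfact (m.*2.+1)) = INR (dfact (m.*2)).
Proof.
elim: m => [|m [IH1 IH2]].
- rewrite /= I0 I1. split; ring.
- rewrite doubleS /= -/(dfact (m.*2.+1)) -/(dfact m.*2.+2).
  split.
  + rewrite dfact_SS dfact_odd !mult_INR INR_SS S_INR.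
    transitivity ((INR m.*2 + 2) * I m.*2.+2 * INR (dfact m.*2)); first ring.
    rewrite I_rec. transitivity ((INR m.*2 + 1) * (I m.*2 * INR (dfact m.*2))); first ring.
    rewrite IH1. ring.
  + rewrite (dfact_SS m.*2) !mult_INR !INR_SS S_INR.
    have := I_rec m.*2.+1. rewrite S_INR => H.
    transitivity ((INR m.*2 + 1 + 2) * I m.*2.+3 * INR (dfact m.*2.+1)); first ring.
    rewrite H. transitivity ((INR m.*2 + 1 + 1) * (I m.*2.+1 * INR (dfact m.*2.+1))); first ring.
    rewrite IH2. ring.
Qed.

Lemma dfact_pos k : (0 < dfact k)%nat.
Proof.
have H : forall k, (0 < dfact k)%nat /\ (0 < dfact k.+1)%nat.
  elim=> [|j [H1 H2]] //. split => //. rewrite dfact_SS. by rewrite muln_gt0.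
by case: (H k).
Qed.

Lemma INR_dfact_pos k : 0 < INR (dfact k).
Proof. apply: lt_0_INR. apply/ltP. exact: dfact_pos. Qed.

Lemma INR_double m : INR (m.*2) = 2 * INR m.
Proof. by rewrite -mul2n mult_INR. Qed.

Lemma rho_bounds m : (0 < m)%nat ->
  let X := INR (dfact (m.*2)) in let Y := INR (dfact (m.*2).-1) in
  PI * INR m * (Y * Y) <= X * X /\ X * X <= PI / 2 * (2 * INR m + 1) * (Y * Y).
Proof.
case: m => [|m] // _ X Y.
rewrite S_INR.
set W := INR (dfact m.*2).
have HX : 0 < X by apply: INR_dfact_pos.
have HY : 0 < Y by apply: INR_dfact_pos.
have HW : 0 < W by apply: INR_dfact_pos.
have eY : Y = INR (dfact m.*2.+1) by rewrite /Y doubleS.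
have eX : X = (2 * INR m + 2) * W.
  by rewrite /X doubleS dfact_SS mult_INR INR_SS INR_double.
have [A1 A2] := Iclosed m.+1.
have [_ B2] := Iclosed m.
have M1 := I_mono (m.+1).*2.
have M2 := I_mono (m.*2.+1).
rewrite -/X -/Y in A1 A2.
move: A2. rewrite doubleS dfact_SS mult_INR -eY INR_SS S_INR INR_double -doubleS => A2.
rewrite -eY -/W in B2.
move: M2. rewrite -doubleS => M2.
set a := I (m.+1).*2 in A1 A2 M1 M2.
set b := I (m.+1).*2.+1 in A2 M1.
set c := I m.*2.+1 in B2 M2.
have XY : 0 <= X * Y by nra.
split.
- have H1 := Rmult_le_compat_r (X * Y) _ _ XY M2.
  have H2 : a * (X * Y) = PI/2 * Y * Y by rewrite -Rmult_assoc A1; ring.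
  have H3 : c * (X * Y) = W * X by rewrite -B2; ring.
  rewrite H2 H3 in H1.
  have H4 : X * X = (2 * INR m + 2) * (W * X) by rewrite {1}eX; ring.
  rewrite H4. nra.
- have H1 := Rmult_le_compat_r (X * ((2 * INR m + 3) * Y)) _ _ ltac:(nra) M1.
  have H2 : b * (X * ((2 * INR m + 3) * Y)) = X * X by rewrite -{2}A2; ring.
  have H3 : a * (X * ((2 * INR m + 3) * Y)) = PI/2 * Y * ((2 * INR m + 3) * Y).
    by rewrite -A1; ring.
  rewrite H2 H3 in H1. nra.
Qed.

Lemma asym n : (2 <= n)%nat ->
  Rabs (INR (dfact (n.*2 - 2)) / (2 * INR (dfact (n.*2 - 3))) - sqrt (PI * INR n) / 2)
  <= PI / sqrt (INR n).
Proof.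
case: n => [|m] // Hm.
have Hm0 : (0 < m)%nat by [].
have E1 : (m.+1.*2 - 2 = m.*2)%nat by rewrite doubleS; lia.
have E2 : (m.+1.*2 - 3 = (m.*2).-1)%nat by rewrite doubleS; lia.
rewrite E1 E2.
have [L U] := rho_bounds m Hm0.
set X := INR (dfact m.*2) in L U *.
set Y := INR (dfact m.*2.-1) in L U *.
have HX : 0 < X by apply: INR_dfact_pos.
have HY : 0 < Y by apply: INR_dfact_pos.
have Hn : 1 <= INR m by apply: (le_INR 1); apply/leP.
rewrite S_INR.
set rho := X / (2 * Y).
have Hrho : rho * (2 * Y) = X by rewrite /rho; field; lra.
have Hr0 : 0 <= rho by rewrite /rho; apply: Rlt_le; apply: Rdiv_lt_0_compat; lra.
have HPI : 1 < PI/2 := PI2_1.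
have HY2 : 0 < Y * Y by nra.
have R1 : PI * INR m <= 4 * (rho * rho).
  have : PI * INR m * (Y * Y) <= 4 * (rho * rho) * (Y * Y).
    have -> : 4 * (rho * rho) * (Y * Y) = X * X by rewrite -Hrho; ring.
    exact: L.
  move=> H. by apply: (Rmult_le_reg_r (Y * Y)).
have R2 : 4 * (rho * rho) <= PI / 2 * (2 * INR m + 1).
  have : 4 * (rho * rho) * (Y * Y) <= PI / 2 * (2 * INR m + 1) * (Y * Y).
    have -> : 4 * (rho * rho) * (Y * Y) = X * X by rewrite -Hrho; ring.
    exact: U.
  move=> H. by apply: (Rmult_le_reg_r (Y * Y)).
have Hs0 : 0 < INR m + 1 by lra.
set s := sqrt (INR m + 1).
have Hs : 0 < s by apply: sqrt_lt_R0.
have Hss : s * s = INR m + 1 by apply: sqrt_sqrt; lra.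
have Hp : 1 <= sqrt PI.
  rewrite -sqrt_1. apply: sqrt_le_1_alt. lra.
have Eu : sqrt (PI * (INR m + 1)) = sqrt PI * s by apply: sqrt_mult; lra.
rewrite Eu.
set p := sqrt PI.
have Hpp : p * p = PI by apply: sqrt_sqrt; lra.
set u := p * s / 2.
have Hu : u * u = PI * (INR m + 1) / 4 by rewrite /u; nra.
have Hu0 : s / 2 <= u.
  rewrite /u. have := Rmult_le_compat_r s _ _ (Rlt_le _ _ Hs) Hp. rewrite /p; lra.
have Hru : rho <= u.
  apply: Rnot_lt_le => H. nra.
rewrite Rabs_left1; last lra.
have K : (u - rho) * u <= PI / 4 by nra.
apply: (Rmult_le_reg_r s) => //.
have -> : PI / s * s = PI by field; lra.
nra.
Qed.

Close Scope R_scope.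

Lemma df_even m : dfact (m.*2) = 2 ^ m * m`!.
Proof.
elim: m => [|m IH] //. rewrite doubleS dfact_SS IH expnS factS -mul2n. lia.
Qed.

Lemma df_prod m : dfact (m.*2.+1) * dfact (m.*2) = (m.*2.+1)`!.
Proof.
elim: m => [|m IH] //. rewrite doubleS !dfact_SS (factS m.*2.+2) (factS m.*2.+1) -IH. lia.
Qed.

Lemma key_nat k : 2 * 4 ^ k * dfact (k.*2.+1) = dfact (k.*2.+2) * 'C(k.*2.+1, k).
Proof.
set A := dfact (k.*2.+1). set B := dfact (k.*2.+2). set L := 'C(k.*2.+1, k).
set T := 2 ^ k.+1. set F := (k.+1)`!. set G := (k.*2.+2)`!. set Q := 4 ^ k.
have e1 : B = T * F by rewrite /B -doubleS df_even.
have e2 : A * B = G.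
  rewrite /A /B /G dfact_SS factS -df_prod. lia.
have e3 : L * 2 * (F * F) = G.
  rewrite /L /F /G -(@bin_fact k.*2.+2 k.+1); last by rewrite -addnn; lia.
  have -> : (k.*2.+2 - k.+1 = k.+1)%N by rewrite -addnn; lia.
  rewrite -bin_mid2 -mul2n. lia.
have e4 : T * T = 4 * Q.
  rewrite /T /Q -expnD -[4]/(2 ^ 2) -expnM.  rewrite -expnD. congr (2 ^ _). lia.
have Bpos : 0 < B by apply: dfact_pos.
apply/eqP; rewrite -(eqn_pmul2l Bpos); apply/eqP.
have h1 : B * (2 * Q * A) = 2 * Q * (A * B) by lia.
rewrite h1 e2 {1}e1.
have h2 : T * F * (B * L) = T * F * (T * F * L) by rewrite -e1.
rewrite h2.
have h3 : T * F * (T * F * L) = (T * T) * (L * (F * F)) by lia.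
rewrite h3 e4 -e3. lia.
Qed.

Theorem mainTheorem7 :
  (forall (n : nat) (s : seq ptree), 2 <= n -> enum_trees n s ->
     [/\ sumn (map leaf_path_total s) = 4 ^ (n - 2),
         (sumn (map nleaves s)).*2 = 'C(n.*2 - 2, n - 1)
       & Rdiv (INR (sumn (map leaf_path_total s))) (INR (sumn (map nleaves s)))
         = Rdiv (INR (dfact (n.*2 - 2))) (Rmult 2 (INR (dfact (n.*2 - 3))))])
  /\
  (exists (C : R) (N : nat), forall n : nat, N <= n ->
     Rle (Rabs (Rminus (Rdiv (INR (dfact (n.*2 - 2))) (Rmult 2 (INR (dfact (n.*2 - 3)))))
                       (Rdiv (sqrt (Rmult PI (INR n))) 2)))
         (Rdiv C (sqrt (INR n)))).
Proof.
split.
- case=> [|[|k]] s // _ Hs.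
  have Hp := @enum_perm _ _ _ Hs (TT_enum k.+1).
  rewrite (@sumn_perm _ leaf_path_total _ _ Hp) (@sumn_perm _ nleaves _ _ Hp) TT_paths TT_leaves.
  have -> : (k.+2 - 2 = k)%N by lia.
  have -> : (k.+2.*2 - 2 = k.*2.+2)%N by rewrite !doubleS; lia.
  have -> : (k.+2.*2 - 3 = k.*2.+1)%N by rewrite !doubleS; lia.
  have -> : (k.+2 - 1 = k.+1)%N by lia.
  split => //; first exact: bin_mid2.
  have HA := INR_dfact_pos k.*2.+1.
  move: (key_nat k) HA. generalize (dfact k.*2.+1) (dfact k.*2.+2) => A B HK HA.
  have HR : Rmult (Rmult 2 (INR (4 ^ k))) (INR A) = Rmult (INR B) (INR ('C(k.*2.+1, k))).
    have H := f_equal INR HK. rewrite !mult_INR in H.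
    have E2 : forall x, Rmult (INR 2) x = Rmult 2 x by move=> x; simpl; ring.
    by rewrite E2 in H.
  have HL : Rlt 0 (INR 'C(k.*2.+1, k)).
    apply: lt_0_INR. apply/ltP. by rewrite bin_gt0; lia.
  transitivity (Rdiv (Rmult (Rmult 2 (INR (4 ^ k))) (INR A)) (Rmult (INR 'C(k.*2.+1, k)) (Rmult 2 (INR A)))).
    field. split; apply: Rgt_not_eq; lra.
  rewrite HR. field. split; apply: Rgt_not_eq; lra.
- exists PI, 2 => n Hn. exact: asym.
Qed.
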